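(* For every $\mathcal{V}$-valued relation $d\colon X\times X\to\mathcal{V}$, $\alpha_X(\gamma_X(d))$ is the least $\mathcal{V}$-category on $X$ above $d$ (in the pointwise order $\sqsubseteq$), i.e. its metric closure.
   Context: $\mathcal{V}$ is a quantale: a complete lattice $(\mathcal{V},\sqsubseteq)$ with a commutative monoid structure $(\mathcal{V},\otimes,k)$ such that $\otimes$ preserves arbitrary joins in each argument; $d_\mathcal{V}(a,-)$ denotes the right adjoint of $a\otimes -$ (residuation). A $\mathcal{V}$-category on $X$ is $d\colon X\times X\to\mathcal{V}$ with $k\sqsubseteq d(x,x)$ and $d(x,y)\otimes d(y,z)\sqsubseteq d(x,z)$. Write $\bigwedge$ for meets in the order $\sqsubseteq$. For $S\subseteq\mathcal{V}^X$, $\alpha_X(S)(x_1,x_2)=\bigwedge_{p\in S} d_\mathcal{V}(p(x_1),p(x_2))$; $\gamma_X(d)=\{p\colon X\to\mathcal{V}\mid d(x_1,x_2)\sqsubseteq d_\mathcal{V}(p(x_1),p(x_2))\text{ for all }x_1,x_2\}$. *)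

(* Defs.v *)
(* A (unital, commutative) quantale: a complete lattice (V, qle) with
   arbitrary joins qsup, and a commutative monoid (qten, qk) such that
   qten preserves arbitrary joins in each argument (by commutativity it
   suffices to require it in the second argument). *)
Record quantale := Quantale {
  qT :> Type;
  qle : qT -> qT -> Prop;
  qle_refl : forall a, qle a a;
  qle_trans : forall a b c, qle a b -> qle b c -> qle a c;
  qle_antisym : forall a b, qle a b -> qle b a -> a = b;
  qsup : (qT -> Prop) -> qT;
  qsup_ub : forall (S : qT -> Prop) a, S a -> qle a (qsup S);
  qsup_least : forall (S : qT -> Prop) b, (forall a, S a -> qle a b) -> qle (qsup S) b;
  qten : qT -> qT -> qT;
  qk : qT;
  qtenA : forall a b c, qten a (qten b c) = qten (qten a b) c;
  qtenC : forall a b, qten a b = qten b a;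
  qten1 : forall a, qten qk a = a;
  qten_sup : forall a (S : qT -> Prop),
      qten a (qsup S) = qsup (fun y => exists x, S x /\ y = qten a x)
}.

Arguments qle {_}. Arguments qsup {_}. Arguments qten {_}. Arguments qk {_}.

Definition qinf {V : quantale} (S : V -> Prop) : V :=
  qsup (fun b => forall a, S a -> qle b a).

(* residuation: d_V(a, -) is the right adjoint of a (x) - *)
Definition dV {V : quantale} (a b : V) : V :=
  qsup (fun c => qle (qten a c) b).

Definition is_Vcat {V : quantale} {X : Type} (d : X -> X -> V) : Prop :=
  (forall x, qle qk (d x x)) /\
  (forall x y z, qle (qten (d x y) (d y z)) (d x z)).

Definition alphaX {V : quantale} {X : Type} (S : (X -> V) -> Prop) : X -> X -> V :=
  fun x1 x2 => qinf (fun v => exists p, S p /\ v = dV (p x1) (p x2)).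

Definition gammaX {V : quantale} {X : Type} (d : X -> X -> V) : (X -> V) -> Prop :=
  fun p => forall x1 x2, qle (d x1 x2) (dV (p x1) (p x2)).

Definition rel_le {V : quantale} {X : Type} (d e : X -> X -> V) : Prop :=
  forall x y, qle (d x y) (e x y).

(* Main.v *)
Require Import Defs.

Section L.
Variable V : quantale.

Lemma ten_monor (a b c : V) : qle b c -> qle (qten a b) (qten a c).
Proof.
  intro H.
  assert (E : qsup (fun y => y = b \/ y = c) = c).
  { apply qle_antisym.
    - apply qsup_least. intros y [-> | ->]; [exact H | apply qle_refl].
    - apply qsup_ub. right; reflexivity. }
  rewrite <- E, qten_sup. apply qsup_ub. exists b. split; [left; reflexivity | reflexivity].
Qed.

Lemma ten_monol (a b c : V) : qle b c -> qle (qten b a) (qten c a).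
Proof. intro H. rewrite (qtenC _ b), (qtenC _ c). now apply ten_monor. Qed.

Lemma ten_mono (a b c d : V) : qle a b -> qle c d -> qle (qten a c) (qten b d).
Proof.
  intros H1 H2. eapply qle_trans. apply ten_monol, H1. apply ten_monor, H2.
Qed.

Lemma adj1 (a b c : V) : qle (qten a c) b -> qle c (dV a b).
Proof. intro H. unfold dV. apply qsup_ub. exact H. Qed.

Lemma adj2 (a b c : V) : qle c (dV a b) -> qle (qten a c) b.
Proof.
  intro H. eapply qle_trans. apply ten_monor, H.
  unfold dV. rewrite qten_sup. apply qsup_least. intros y [x [Hx ->]]. exact Hx.
Qed.

Lemma inf_lb (S : V -> Prop) a : S a -> qle (qinf S) a.
Proof. intro H. unfold qinf. apply qsup_least. intros b Hb. apply Hb, H. Qed.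

Lemma inf_glb (S : V -> Prop) b : (forall a, S a -> qle b a) -> qle b (qinf S).
Proof. intro H. unfold qinf. apply qsup_ub. exact H. Qed.
End L.

Theorem mainTheorem8 (V : quantale) (X : Type) (d : X -> X -> V) :
  is_Vcat (alphaX (gammaX d)) /\
  rel_le d (alphaX (gammaX d)) /\
  (forall e : X -> X -> V, is_Vcat e -> rel_le d e -> rel_le (alphaX (gammaX d)) e).
Proof.
  split; [split|split].
  - intro x. apply inf_glb. intros a [p [_ ->]]. apply adj1.
    rewrite qtenC, qten1. apply qle_refl.
  - intros x y z. apply inf_glb. intros a [p [Hp ->]]. apply adj1.
    eapply qle_trans with (qten (qten (p x) (dV (p x) (p y))) (dV (p y) (p z))).
    + rewrite qtenA. apply ten_mono; [apply ten_monor|]; apply inf_lb; exists p; auto.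
    + eapply qle_trans. apply ten_monol, adj2, qle_refl. apply adj2, qle_refl.
  - intros x y. apply inf_glb. intros a [p [Hp ->]]. apply Hp.
  - intros e [He1 He2] Hde x y.
    assert (G : gammaX d (e x)).
    { intros x1 x2. apply adj1. eapply qle_trans. apply ten_monor, Hde. apply He2. }
    assert (H : qle (alphaX (gammaX d) x y) (dV (e x x) (e x y))).
    { apply inf_lb. exists (e x). auto. }
    rewrite <- (qten1 _ (alphaX (gammaX d) x y)).
    eapply qle_trans. apply ten_monol, He1. apply adj2, H.
Qed.
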